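(* Any protocol $P$ among $n$ players that achieves sender anonymity against a single malicious player (no collusions), where the only resources available are pairwise shared secret key bits, a reliable broadcast channel and public communication, uses at least $n$ bits of pairwise shared key.
   Context: The key-sharing graph of the protocol is the undirected graph $G=(V,E)$ whose nodes are the players, with an edge between nodes $i$ and $j$ iff $i$ and $j$ share one bit of secret key; the number of pairwise shared key bits is $|E|$. Sender anonymity: for an adversary corrupting a set of $t$ players not including the sender $s$ and observing all communication $C$ and the randomness $G^t$ of the corrupted players, $\max_S\Pr[S=s\mid G^t,C]=\max_S\Pr[S=s]=1/(n-t)$, maximum over random variables $S$ depending only on $C$ and $G^t$. *)

(* Defs.v *)
From mathcomp Require Import all_boot all_order all_algebra.
Set Implicit Arguments.
Unset Strict Implicit.
Unset Printing Implicit Defensive.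
Import Order.TTheory GRing.Theory Num.Theory.
Local Open Scope ring_scope.

(* Model of a broadcast protocol among n players 'I_n whose only resources are
   pairwise shared secret key bits and a public reliable broadcast channel.
   - Key bits are indexed by 'I_nkeys; key bit e is shared between the two
     players [ends e] (so the key-sharing (multi)graph has nkeys edges).
   - The protocol runs for [rounds] rounds; in every round every player
     broadcasts a symbol of [alph], computed deterministically from its
     identity, the public history of previous rounds, its own input
     (Some m if it is the sender with message m, None otherwise) and the key
     bits it knows (its key view: the bits on its incident edges). *)
Unset Implicit Arguments.
Record protocol (n : nat) (M : Type) := Protocol {
  nkeys : nat;
  ends : 'I_nkeys -> 'I_n * 'I_n;
  alph : Type;
  rounds : nat;
  next : 'I_n -> seq ('I_n -> alph) -> option M ->
         {ffun 'I_nkeys -> option bool} -> alph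
}.
Set Implicit Arguments.
Arguments nkeys {n M}.
Arguments ends {n M}.
Arguments alph {n M}.
Arguments rounds {n M}.
Arguments next {n M}.

Section Protocol.
Variables (n : nat) (M : Type) (P : protocol n M).

Definition keys := {ffun 'I_(nkeys P) -> bool}.

Definition key_graph_ok : Prop := forall e, (ends P e).1 != (ends P e).2.

Definition key_view (i : 'I_n) (k : keys) : {ffun 'I_(nkeys P) -> option bool} :=
  [ffun e => if (i == (ends P e).1) || (i == (ends P e).2)
             then Some (k e) else None].

Definition input (s : 'I_n) (m : M) (i : 'I_n) : option M :=
  if i == s then Some m else None.

Fixpoint run (s : 'I_n) (m : M) (k : keys) (r : nat) : seq ('I_n -> alph P) :=
  match r with
  | 0 => [::]
  | r'.+1 => let h := run s m k r' in
             rcons h (fun i => next P i h (input s m i) (key_view i k))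
  end.

Definition transcript (s : 'I_n) (m : M) (k : keys) := run s m k (rounds P).

Definition correct : Prop :=
  exists dec : seq ('I_n -> alph P) -> M,
    forall s m k, dec (transcript s m k) = m.

(* Probability that the adversary corrupting player j, guessing the sender by
   S (a function of the communication C and of its key bits G^j), is right,
   when the sender is uniform among the n-1 other players, the message is m
   and the keys are uniform. *)
Definition guess_success (j : 'I_n) (m : M)
    (S : seq ('I_n -> alph P) -> {ffun 'I_(nkeys P) -> option bool} -> 'I_n) : rat :=
  (#|[set sk : 'I_n * keys | (sk.1 != j) &&
        (S (transcript sk.1 m sk.2) (key_view j sk.2) == sk.1)]|)%:R%R
  / (n.-1 * 2 ^ nkeys P)%:R.

Definition sender_anonymous_1 : Prop :=
  forall (j : 'I_n) (m : M),
    (forall S, guess_success j m S <= (n.-1)%:R^-1) /\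
    (exists S, guess_success j m S = (n.-1)%:R^-1).

End Protocol.

(* Main.v *)
Require Import Defs.
From mathcomp Require Import all_boot all_order all_algebra.
From mathcomp Require Import zify.
From Stdlib Require Import Classical ClassicalEpsilon FunctionalExtensionality.
Set Implicit Arguments. Unset Strict Implicit. Unset Printing Implicit Defensive.
Import Order.TTheory GRing.Theory Num.Theory.

Section Aux.
Variables (n : nat) (M : Type) (P : protocol n M).

Definition cons_ok (s : 'I_n) (h : seq ('I_n -> alph P))
  (v : {ffun 'I_(nkeys P) -> option bool}) : Prop :=
  forall x0 r, r < size h -> nth x0 h r s = Defs.next P s (take r h) None v.

Lemma cons_rcons s h x v :
  cons_ok s (rcons h x) v <-> cons_ok s h v /\ x s = Defs.next P s h None v.
Proof.
split.
- move=> H; split.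
  + move=> x0 r lt; have := H x0 r.
    rewrite size_rcons nth_rcons lt -[rcons h x]cats1 takel_cat; last exact: ltnW.
    apply; exact: ltnW.
  + have := H x (size h); rewrite size_rcons nth_rcons ltnn eqxx -[rcons h x]cats1 take_size_cat //.
    by apply.
- case=> H E x0 r; rewrite size_rcons ltnS leq_eqVlt => /orP[/eqP ->|lt].
  + by rewrite nth_rcons ltnn eqxx -[rcons h x]cats1 take_size_cat.
  + rewrite nth_rcons lt -[rcons h x]cats1 takel_cat; [exact: H | exact: ltnW].
Qed.

Lemma run_other t m k r s : s != t -> cons_ok s (run t m k r) (key_view s k).
Proof.
move=> st; elim: r => [|r IH] /=; first by move=> x0 r; rewrite /= ltn0.
apply/cons_rcons; split=> //; by rewrite /input (negbTE st).
Qed.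

Lemma run_eq s m1 m2 k r :
  cons_ok s (run s m1 k r) (key_view s k) ->
  cons_ok s (run s m2 k r) (key_view s k) -> run s m1 k r = run s m2 k r.
Proof.
elim: r => [|r IH] //= /cons_rcons[H1 E1] /cons_rcons[H2 E2].
have e := IH H1 H2; rewrite e in E1 *; congr rcons.
apply: functional_extensionality => i /=.
case: (eqVneq i s) => [->|ne]; first by rewrite E1 E2.
by rewrite /input (negbTE ne).
Qed.

Definition incid (i : 'I_n) (e : 'I_(nkeys P)) : bool :=
  (i == (ends P e).1) || (i == (ends P e).2).

Definition deg (i : 'I_n) : nat := \sum_(e < nkeys P) (incid i e : nat).

Lemma exists_other (A : {set 'I_n}) : #|A| < n -> exists t, t \notin A.
Proof.
move=> H; case: (pickP (predC (mem A))) => [t Ht|H0]; first by exists t.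
suff: #|A| = n by move=> E; rewrite E ltnn in H.
rewrite -[n in _ = n]card_ord; apply: eq_card => i.
by have := H0 i; rewrite /= => /negbFE ->.
Qed.

Lemma sum_deg : key_graph_ok P -> \sum_(i < n) deg i = (nkeys P).*2.
Proof.
move=> ok; rewrite /deg exchange_big /=.
transitivity (\sum_(e < nkeys P) 2); last by rewrite sum_nat_const card_ord muln2.
apply: eq_bigr => e _.
have ne := ok e.
rewrite (bigD1 (ends P e).1) //= (bigD1 (ends P e).2) /=; last by rewrite eq_sym.
rewrite /incid !eqxx /= orbT big1 //.
move=> i /andP[n1 n2]; by rewrite (negbTE n1) (negbTE n2).
Qed.

Lemma low_deg : key_graph_ok P -> nkeys P < n -> exists s, deg s < 2.
Proof.
move=> ok lt; apply/existsP; rewrite -[X in is_true X]negbK negb_exists; apply/negP => /forallP H.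
have : \sum_(i < n) 2 <= \sum_(i < n) deg i by apply: leq_sum => i _; rewrite leqNgt H.
rewrite sum_deg // sum_nat_const card_ord; lia.
Qed.

Lemma graph_lemma : key_graph_ok P -> nkeys P < n -> 2 <= n ->
  exists s j, s != j /\ forall e, incid s e -> incid j e.
Proof.
move=> ok lt n2; have [s Hs] := low_deg ok lt.
case: (pickP (fun e => incid s e)) => [e He | none].
- exists s, (if s == (ends P e).1 then (ends P e).2 else (ends P e).1); split.
  + have ne := ok e; move: He; rewrite /incid.
    case: (eqVneq s (ends P e).1) => [->|n1] //= /eqP ->; by rewrite eq_sym.
  + move=> e' He'; case: (eqVneq e' e) => [->|ne'].
    * move: He; rewrite /incid; case: (eqVneq s (ends P e).1) => [->|n1] /=.
      - by rewrite eqxx orbT.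
      - by rewrite eqxx.
    * exfalso; move: Hs; rewrite /deg (bigD1 e) // (bigD1 e') /=; last by rewrite ne'.
      rewrite He He' /=; lia.
- have [j Hj] : exists j, j \notin [set s] by apply: exists_other; rewrite cards1.
  exists s, j; split; first by rewrite in_set1 eq_sym in Hj.
  by move=> e; rewrite none.
Qed.

Definition recon (s : 'I_n) (vj : {ffun 'I_(nkeys P) -> option bool}) :
  {ffun 'I_(nkeys P) -> option bool} :=
  [ffun e => if incid s e then vj e else None].

Lemma recon_eq s j k : (forall e, incid s e -> incid j e) ->
  recon s (key_view j k) = key_view s k.
Proof.
move=> H; apply/ffunP => e; rewrite !ffunE.
case E: (incid s e); last by rewrite /incid in E; rewrite E.
by have := H e E; rewrite /incid in E * => ->; rewrite E.
Qed.

End Aux.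

Theorem mainTheorem4 (n : nat) (M : Type) (P : protocol n M) :
  3 <= n ->
  (exists m1 m2 : M, m1 <> m2) ->
  key_graph_ok P ->
  correct P ->
  sender_anonymous_1 P ->
  n <= nkeys P.
Proof.
move=> n3 [m1 [m2 m12]] ok [dec Hdec] anon.
rewrite leqNgt; apply/negP => lt.
have [s [j [sj Hsj]]] := graph_lemma ok lt (ltnW n3).
have [t Ht] : exists t, t \notin [set s; j].
  by apply: exists_other; rewrite cards2 sj.
rewrite !inE negb_or in Ht; case/andP: Ht => ts tj.
have [m [k0 Hk0]] : exists (m : M) (k : keys P), ~ cons_ok s (transcript s m k) (key_view s k).
  apply: NNPP => H0; apply: m12.
  have C : forall (m : M) (k : keys P), cons_ok s (transcript s m k) (key_view s k).
    move=> m k; apply: NNPP => Hn; apply: H0; by exists m, k.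
  pose k : keys P := [ffun=> false].
  by rewrite -(Hdec s m1 k) -(Hdec s m2 k) /transcript (run_eq (C m1 k) (C m2 k)).
pose S := fun (h : seq ('I_n -> alph P)) (vj : {ffun 'I_(nkeys P) -> option bool}) =>
  if excluded_middle_informative (cons_ok s h (recon s vj)) then t else s.
have [Hle _] := anon j m.
have := Hle S; rewrite /guess_success.
set A := [set sk : 'I_n * keys P | _].
have cardA : (2 ^ nkeys P).+1 <= #|A|.
  have sub : (s, k0) |: [set (t, k) | k : keys P] \subset A.
    apply/subsetP => -[x k]; rewrite !inE => /orP[/eqP [-> ->]|/imsetP[k' _ [-> ->]]] /=.
    + rewrite sj /S; case: excluded_middle_informative => //= Hc.
      by exfalso; apply: Hk0; rewrite -(recon_eq k0 Hsj).
    + rewrite tj /S; case: excluded_middle_informative => //= Hc.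
      by exfalso; apply: Hc; rewrite (recon_eq k' Hsj); apply: run_other; rewrite eq_sym.
  apply: leq_trans (subset_leq_card sub).
  rewrite cardsU1 card_imset; last by move=> a b [].
  rewrite /keys card_ffun card_bool card_ord.
  have -> : (s, k0) \notin [set (t, k) | k : keys P].
    by apply/imsetP => -[k _ [E _]]; rewrite E eqxx in ts.
  by rewrite add1n.
have n1 : (0 < n.-1)%N by lia.
have p2 : (0 < 2 ^ nkeys P)%N by rewrite expn_gt0.
rewrite ler_pdivrMr; last by rewrite ltr0n muln_gt0 n1 p2.
rewrite natrM mulrA mulVf ?pnatr_eq0 -?lt0n // mul1r ler_nat.
by rewrite leqNgt cardA.
Qed.
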